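(* For every $n\in\mathbb{N}$, \[ \mathcal{M}^{(2)}(n)=\min_{1\le s\le t\le n}\mathcal{M}^{(2)}(n,s,t)=\Bigl\lfloor\frac{n^2-10n+33}{44}\Bigr\rfloor, \] i.e. this is the minimal number of monochromatic generalized Schur triples $(x,y,x+2y)$ attainable under a $2$-coloring of $\{1,\dots,n\}$ of the form $R^sB^{t-s}R^{n-t}$.
   Context: For real $a>0$ and integers $1\le s\le t\le n$, $\mathcal{M}^{(a)}(n,s,t)$ is the number of ordered triples $T=(x,y,x+\lfloor ay\rfloor)\in\{1,\dots,n\}^3$ such that $T\in(\{1,\dots,s\}\cup\{t+1,\dots,n\})^3$ or $T\in\{s+1,\dots,t\}^3$ (i.e. monochromatic triples under the coloring $R^sB^{t-s}R^{n-t}$, which colors $1..s$ and $t+1..n$ red and $s+1..t$ blue). *)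

(* Defs.v *)
From mathcomp Require Import all_boot all_order all_algebra.
From mathcomp Require Import reals.
Set Implicit Arguments. Unset Strict Implicit. Unset Printing Implicit Defensive.
Import Order.TTheory GRing.Theory Num.Theory.

Local Open Scope ring_scope.

Definition is_red (n s t : nat) (z : int) : bool :=
  ((1 <= z) && (z <= s%:Z)) || ((t%:Z < z) && (z <= n%:Z)).
Definition is_blue (s t : nat) (z : int) : bool :=
  (s%:Z < z) && (z <= t%:Z).

(* Monochromatic triple T = (x, y, x + floor(a y)); x, y range over {1..n}
   and the third coordinate must also lie in {1..n} (implied by the
   colour-class membership). *)
Definition mono_triple (R : realType) (a : R) (n s t x y : nat) : bool :=
  let z := (x%:Z + Num.floor (a * y%:R))%R in
  (is_red n s t x%:Z && is_red n s t y%:Z && is_red n s t z)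
  || (is_blue s t x%:Z && is_blue s t y%:Z && is_blue s t z).

Definition Mcount (R : realType) (a : R) (n s t : nat) : nat :=
  (\sum_(1 <= x < n.+1) \sum_(1 <= y < n.+1) mono_triple a n s t x y)%N.

(* Main.v *)
Require Import Defs.
From Stdlib Require Import ZArith Lia Psatz.
From mathcomp Require Import all_boot all_order all_algebra zify.
From mathcomp Require Import reals.
Import Order.TTheory GRing.Theory Num.Theory.
Set Implicit Arguments. Unset Strict Implicit. Unset Printing Implicit Defensive.

Definition redn (n s t k : nat) : bool := ((1 <= k) && (k <= s)) || ((t < k) && (k <= n)).
Definition bluen (s t k : nat) : bool := (s < k) && (k <= t).
Definition mnat (n s t x y : nat) : bool :=
  (redn n s t x && redn n s t y && redn n s t (x + 2 * y))
  || (bluen s t x && bluen s t y && bluen s t (x + 2 * y)).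

Section RS.
Local Open Scope ring_scope.
Lemma floor2 (R : realType) (y : nat) : Num.floor ((2%:R : R) * y%:R) = Posz (2 * y).
Proof.
have -> : (2%:R : R) * y%:R = ((Posz (2 * y))%:~R)%R by rewrite -natrM.
by rewrite intrKfloor.
Qed.

Lemma mono_eq (R : realType) n s t x y : mono_triple (2%:R : R) n s t x y = mnat n s t x y.
Proof.
rewrite /mono_triple /mnat floor2 -PoszD /is_red /is_blue /redn /bluen.
by rewrite !lez_nat !ltz_nat.
Qed.

End RS.

Lemma Mcount_eq (R : realType) n s t :
  Mcount (2%:R : R) n s t = \sum_(1 <= y < n.+1) \sum_(1 <= x < n.+1) mnat n s t x y.
Proof.
rewrite /Mcount exchange_big. apply: eq_bigr => y _. apply: eq_bigr => x _.
by rewrite mono_eq.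
Qed.
Definition P (m c : nat) : nat := \sum_(1 <= y < m.+1) (c - 2 * y).

Lemma P0 c : P 0 c = 0. Proof. by rewrite /P big_geq. Qed.
Lemma PS m c : P m.+1 c = P m c + (c - 2 * m.+1). Proof. by rewrite /P big_nat_recr. Qed.

Lemma P_lb m c : m * c <= P m c + m * m.+1.
Proof. elim: m => [|m IH]; first by rewrite P0. rewrite PS. nia. Qed.

Lemma P_ex m c : 2 * m <= c -> P m c + m * m.+1 = m * c.
Proof. elim: m => [|m IH] h; first by rewrite P0. rewrite PS. have := IH ltac:(lia). nia. Qed.

Lemma P_full m c : c <= 2 * m+2 -> 4 * P m c + 2 * c = c * c + c %% 2.
Proof.
elim: m => [|m IH] h.
  rewrite P0. have : c <= 2 by lia. by case: c h => [|[|[|]]].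
rewrite PS. case: (leqP c (2 * m+2)) => hc.
  have := IH hc. lia.
have := P_ex (m:=m) (c:=c) ltac:(lia). nia.
Qed.

Lemma cnt m a k c : \sum_(1 <= x < m.+1) ((a < x) && (x + k <= c)) = minn (c - k) m - minn a m.
Proof.
elim: m => [|m IH]; first by rewrite big_geq //; lia.
rewrite big_nat_recr //= IH. lia.
Qed.
Definition Lxy (n s t x y : nat) : nat :=
  (y <= s) * ((0 < x) && (x + 2 * y <= s)) + (y <= s) * ((t < x) && (x + 2 * y <= n))
  + ((s < y) && (y <= t)) * ((s < x) && (x + 2 * y <= t)) + (t < y) * ((t < x) && (x + 2 * y <= n)).

Lemma L_le n s t x y : 1 <= x <= n -> 1 <= y <= n -> s <= t <= n -> Lxy n s t x y <= (mnat n s t x y : nat).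
Proof.
move=> hx hy hst. rewrite /Lxy /mnat /redn /bluen.
case: (leqP y s) => h1; case: (leqP y t) => h2; case: (leqP x s) => h3; case: (leqP x t) => h4;
 rewrite /= ?andbT ?andbF ?orbF ?orbT /=; lia.
Qed.

Lemma L_eq n s t x y : 1 <= x <= n -> 1 <= y <= n -> s <= t <= n ->
  (3 * s <= t) || (n < 3) -> n < 2 * t + 3 -> (mnat n s t x y : nat) = Lxy n s t x y.
Proof.
move=> hx hy hst hc hn. rewrite /Lxy /mnat /redn /bluen.
case: (leqP y s) => h1; case: (leqP y t) => h2; case: (leqP x s) => h3; case: (leqP x t) => h4;
 rewrite /= ?andbT ?andbF ?orbF ?orbT /=; lia.
Qed.

Definition lb (n s t y : nat) : nat :=
  ((0 < y) && (y <= s)) * (s - 2 * y) + ((0 < y) && (y <= s)) * (n - 2 * y - t)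
  + ((s < y) && (y <= t)) * (t - 2 * y - s) + ((t < y) && (y <= n)) * (n - 2 * y - t).

Lemma inner n s t y : 1 <= y <= n -> s <= t <= n ->
  \sum_(1 <= x < n.+1) Lxy n s t x y = lb n s t y.
Proof.
move=> hy hst. rewrite /Lxy !big_split /= -!big_distrr /= !cnt /lb.
have -> : (0 < y) = true by lia. have -> : (y <= n) = true by lia.
case: (leqP y s) => h1; case: (leqP y t) => h2; rewrite /= ?mul0n ?mul1n ?andbT ?andbF /=; lia.
Qed.

Lemma restrict n lo hi (F : nat -> nat) : lo <= hi <= n ->
  \sum_(1 <= y < n.+1) ((lo < y) && (y <= hi)) * F y = \sum_(1 <= y < (hi - lo).+1) F (y + lo).
Proof.
move=> h.
rewrite (@big_cat_nat _ _ _ lo.+1) //; last by lia.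
rewrite (@big_cat_nat _ _ _ hi.+1 lo.+1) //; last by lia.
rewrite (@eq_big_nat _ _ _ 1 lo.+1 _ (fun=> 0)); last by move=> i hi'; lia.
rewrite (@eq_big_nat _ _ _ hi.+1 n.+1 _ (fun=> 0)); last by move=> i hi'; lia.
rewrite !big1_eq !Monoid.simpm.
rewrite (@eq_big_nat _ _ _ lo.+1 hi.+1 _ F); last by move=> i hi'; lia.
have -> : lo.+1 = 1 + lo by lia.
rewrite big_addn. have -> : hi.+1 - lo = (hi - lo).+1 by lia. all: first [reflexivity | lia].
Qed.

Lemma outer n s t : 1 <= s -> s <= t <= n ->
  \sum_(1 <= y < n.+1) lb n s t y = P s s + P s (n - t) + P (t - s) (t - 3 * s) + P (n - t) (n - 3 * t).
Proof.
move=> hs hst. rewrite /lb !big_split /= !restrict; try lia.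
rewrite /P !subn0. congr (_ + _ + _ + _); apply: eq_bigr => i _; lia.
Qed.

Lemma M_ge (R : realType) n s t : 1 <= s -> s <= t <= n ->
  P s s + P s (n - t) + P (t - s) (t - 3 * s) + P (n - t) (n - 3 * t) <= Mcount (2%:R : R) n s t.
Proof.
move=> hs hst. rewrite Mcount_eq -outer //.
rewrite big_nat_cond [X in _ <= X]big_nat_cond. apply: leq_sum => y /andP[/andP[h1 h2] _].
rewrite -inner; try lia.
rewrite big_nat_cond [X in _ <= X]big_nat_cond. apply: leq_sum => x /andP[/andP[h3 h4] _].
apply: L_le; lia.
Qed.

Lemma M_eq (R : realType) n s t : 1 <= s -> s <= t <= n ->
  (3 * s <= t) || (n < 3) -> n < 2 * t + 3 ->
  Mcount (2%:R : R) n s t = P s s + P s (n - t) + P (t - s) (t - 3 * s) + P (n - t) (n - 3 * t).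
Proof.
move=> hs hst h1 h2. rewrite Mcount_eq -outer //.
apply: eq_big_nat => y hy. rewrite -inner; try lia.
apply: eq_big_nat => x hx. apply: L_eq; lia.
Qed.
Section KeyZ.
Local Open Scope Z_scope.
Ltac pn x y := assert (x*y >= 0) by (apply Z.le_ge, Z.mul_nonneg_nonneg; lia).
Ltac sq x := assert (x*x >= 0) by (apply Z.le_ge, Z.square_nonneg).
Lemma keyZ (n s t A B C D : Z) : 1 <= s -> s <= t -> t <= n ->
  4*A >= s*s-2*s -> B >= 0 -> B >= s*(n-t)-s*s-s ->
  (2*s+2 >= n-t -> 4*B >= (n-t)*(n-t)-2*(n-t)) ->
  C >= 0 -> (t-3*s >= 0 -> 4*C >= (t-3*s)*(t-3*s)-2*(t-3*s)) ->
  D >= 0 -> (n-3*t >= 0 -> 4*D >= (n-3*t)*(n-3*t)-2*(n-3*t)) ->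
  44*(A+B+C+D) >= n*n-10*n-10.
Proof.
intros H1 H2 H3 HA HB0 HB1 HB2 HC0 HC1 HD0 HD1.
destruct (Z_le_gt_dec 0 (t-3*s)) as [u0|u0];
destruct (Z_le_gt_dec (n-t) (2*s+2)) as [d0|d0];
destruct (Z_le_gt_dec 0 (n-3*t)) as [w0|w0].
- specialize (HB2 ltac:(lia)). specialize (HC1 ltac:(lia)).
  sq ((s-1)-3*(t-3*s-1)). sq ((s-1)-3*(n-t-1)). sq ((t-3*s-1)-(n-t-1)). lia.
- specialize (HB2 ltac:(lia)). specialize (HC1 ltac:(lia)).
  sq ((s-1)-3*(t-3*s-1)). sq ((s-1)-3*(n-t-1)). sq ((t-3*s-1)-(n-t-1)). lia.
- specialize (HC1 ltac:(lia)). specialize (HD1 ltac:(lia)).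
  pn s s. pn s (t-3*s). pn s (n-3*t). sq (2*(t-3*s) - 3*(n-3*t)). sq (11*(n-3*t)-12). lia.
- specialize (HC1 ltac:(lia)).
  pn (n-t-2*s) (6*s+2*(t-3*s)-(n-t)). pn s (t-3*s). nia.
- specialize (HB2 ltac:(lia)). specialize (HD1 ltac:(lia)). nia.
- specialize (HB2 ltac:(lia)). pn s (s-1).
  destruct (Z_le_gt_dec 5 n); [|pn n (5-n); sq (s-1); lia].
  sq ((s-1)-3*(n-t-1)). pn (3*s+n-t-6 - (n-5)) (3*s+n-t-6+(n-5)). pn (s-1) (s-1+12). sq (n-t-1).
  lia.
- specialize (HD1 ltac:(lia)). nia.
- nia.
Qed.
Lemma keyZ' (n s t A B C D d c w : Z) : 1 <= s -> s <= t -> t <= n -> d = n - t ->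
  (c = t - 3*s \/ (c = 0 /\ t - 3*s < 0)) -> (w = n - 3*t \/ (w = 0 /\ n - 3*t < 0)) ->
  4*A + 2*s >= s*s -> B >= 0 -> B + s*(s+1) >= s*d -> (d <= 2*s+2 -> 4*B + 2*d >= d*d) ->
  C >= 0 -> 4*C + 2*c >= c*c -> D >= 0 -> 4*D + 2*w >= w*w ->
  44*(A+B+C+D) >= n*n-10*n-10.
Proof.
intros H1 H2 H3 Hd Hc Hw HA HB0 HB1 HB2 HC0 HC1 HD0 HD1. subst d.
apply keyZ with (s:=s) (t:=t); try lia; intros h.
all: first [ specialize (HB2 ltac:(lia)); lia
           | destruct Hc as [Hc|Hc]; [subst c; lia | lia]
           | destruct Hw as [Hw|Hw]; [subst w; lia | lia] ].
Qed.
End KeyZ.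

Lemma lower (R : realType) n s t : 1 <= s -> s <= t -> t <= n ->
  (n ^ 2 + 33 - 10 * n) %/ 44 <= Mcount (2%:R : R) n s t.
Proof.
move=> hs hst htn.
have hM := M_ge R (n:=n) hs (ltac:(lia) : s <= t <= n).
move: hM.
move Hd: (n - t) => d. move Hc: (t - 3 * s) => c. move Hw: (n - 3 * t) => w.
move=> hM.
have fA := P_full (m:=s) (c:=s) ltac:(lia).
have fB1 := P_lb s d.
have fB2 : d <= 2 * s + 2 -> 4 * P s d + 2 * d = d * d + d %% 2 by move=> h; apply: P_full.
have fC := P_full (m:=t - s) (c:=c) ltac:(lia).
have fD := P_full (m:=d) (c:=w) ltac:(lia).
have K := @keyZ' (Z.of_nat n) (Z.of_nat s) (Z.of_nat t) (Z.of_nat (P s s))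
  (Z.of_nat (P s d)) (Z.of_nat (P (t-s) c)) (Z.of_nat (P d w))
  (Z.of_nat d) (Z.of_nat c) (Z.of_nat w)
  ltac:(lia) ltac:(lia) ltac:(lia) ltac:(lia) ltac:(lia) ltac:(lia) ltac:(lia) ltac:(lia)
  ltac:(lia) ltac:(move=> h; have := fB2 ltac:(lia); lia) ltac:(lia) ltac:(lia) ltac:(lia) ltac:(lia).
rewrite -mulnn. lia.
Qed.

Lemma wit_facts (R : realType) n s t d u : 1 <= s -> t = 3 * s + u -> n = t + d -> n < 2 * t + 3 -> d <= 2 * s + 2 ->
  exists A B C, [/\ Mcount (2%:R : R) n s t = A + B + C, 4 * A + 2 * s = s * s + s %% 2,
     4 * B + 2 * d = d * d + d %% 2 & 4 * C + 2 * u = u * u + u %% 2].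
Proof.
move=> hs ht hn h2 hd.
rewrite M_eq; try lia.
have -> : n - t = d by lia.
have -> : t - 3 * s = u by lia.
have -> : n - 3 * t = 0 by lia.
have h0 := P_full (m:=d) (c:=0) ltac:(lia).
exists (P s s), (P s d), (P (t - s) u); split.
- lia.
- apply: P_full; lia.
- apply: P_full; lia.
- apply: P_full; lia.
Qed.

Lemma wit0 (R : realType) q : 1 <= q -> exists s t : nat, [/\ (1 <= s)%N, (s <= t)%N, (t <= 22 * q + 0)%N &
      Mcount (2%:R : R) (22 * q + 0) s t = (((22 * q + 0) ^ 2 + 33 - 10 * (22 * q + 0)) %/ 44)%N].
Proof.
move=> hq. exists (6 * q + 0), (20 * q + 0).
have [A [B [C [hM hA hB hC]]]] := @wit_facts R (22 * q + 0) (6 * q + 0) (20 * q + 0) (2 * q + 0) (2 * q + 0)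
  ltac:(lia) ltac:(lia) ltac:(lia) ltac:(lia) ltac:(lia).
rewrite hM -mulnn; split; lia.
Qed.

Lemma wit1 (R : realType) q : 1 <= q -> exists s t : nat, [/\ (1 <= s)%N, (s <= t)%N, (t <= 22 * q + 1)%N &
      Mcount (2%:R : R) (22 * q + 1) s t = (((22 * q + 1) ^ 2 + 33 - 10 * (22 * q + 1)) %/ 44)%N].
Proof.
move=> hq. exists (6 * q + 0), (20 * q + 0).
have [A [B [C [hM hA hB hC]]]] := @wit_facts R (22 * q + 1) (6 * q + 0) (20 * q + 0) (2 * q + 1) (2 * q + 0)
  ltac:(lia) ltac:(lia) ltac:(lia) ltac:(lia) ltac:(lia).
rewrite hM -mulnn; split; lia.
Qed.

Lemma wit2 (R : realType) q : 1 <= q -> exists s t : nat, [/\ (1 <= s)%N, (s <= t)%N, (t <= 22 * q + 2)%N &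
      Mcount (2%:R : R) (22 * q + 2) s t = (((22 * q + 2) ^ 2 + 33 - 10 * (22 * q + 2)) %/ 44)%N].
Proof.
move=> hq. exists (6 * q + 0), (20 * q + 0).
have [A [B [C [hM hA hB hC]]]] := @wit_facts R (22 * q + 2) (6 * q + 0) (20 * q + 0) (2 * q + 2) (2 * q + 0)
  ltac:(lia) ltac:(lia) ltac:(lia) ltac:(lia) ltac:(lia).
rewrite hM -mulnn; split; lia.
Qed.

Lemma wit3 (R : realType) q : 1 <= q -> exists s t : nat, [/\ (1 <= s)%N, (s <= t)%N, (t <= 22 * q + 3)%N &
      Mcount (2%:R : R) (22 * q + 3) s t = (((22 * q + 3) ^ 2 + 33 - 10 * (22 * q + 3)) %/ 44)%N].
Proof.
move=> hq. exists (6 * q + 0), (20 * q + 1).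
have [A [B [C [hM hA hB hC]]]] := @wit_facts R (22 * q + 3) (6 * q + 0) (20 * q + 1) (2 * q + 2) (2 * q + 1)
  ltac:(lia) ltac:(lia) ltac:(lia) ltac:(lia) ltac:(lia).
rewrite hM -mulnn; split; lia.
Qed.

Lemma wit4 (R : realType) q : 1 <= q -> exists s t : nat, [/\ (1 <= s)%N, (s <= t)%N, (t <= 22 * q + 4)%N &
      Mcount (2%:R : R) (22 * q + 4) s t = (((22 * q + 4) ^ 2 + 33 - 10 * (22 * q + 4)) %/ 44)%N].
Proof.
move=> hq. exists (6 * q + 0), (20 * q + 2).
have [A [B [C [hM hA hB hC]]]] := @wit_facts R (22 * q + 4) (6 * q + 0) (20 * q + 2) (2 * q + 2) (2 * q + 2)
  ltac:(lia) ltac:(lia) ltac:(lia) ltac:(lia) ltac:(lia).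
rewrite hM -mulnn; split; lia.
Qed.

Lemma wit5 (R : realType) q : exists s t : nat, [/\ (1 <= s)%N, (s <= t)%N, (t <= 22 * q + 5)%N &
      Mcount (2%:R : R) (22 * q + 5) s t = (((22 * q + 5) ^ 2 + 33 - 10 * (22 * q + 5)) %/ 44)%N].
Proof.
exists (6 * q + 1), (20 * q + 3).
have [A [B [C [hM hA hB hC]]]] := @wit_facts R (22 * q + 5) (6 * q + 1) (20 * q + 3) (2 * q + 2) (2 * q + 0)
  ltac:(lia) ltac:(lia) ltac:(lia) ltac:(lia) ltac:(lia).
rewrite hM -mulnn; split; lia.
Qed.

Lemma wit6 (R : realType) q : exists s t : nat, [/\ (1 <= s)%N, (s <= t)%N, (t <= 22 * q + 6)%N &
      Mcount (2%:R : R) (22 * q + 6) s t = (((22 * q + 6) ^ 2 + 33 - 10 * (22 * q + 6)) %/ 44)%N].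
Proof.
exists (6 * q + 1), (20 * q + 4).
have [A [B [C [hM hA hB hC]]]] := @wit_facts R (22 * q + 6) (6 * q + 1) (20 * q + 4) (2 * q + 2) (2 * q + 1)
  ltac:(lia) ltac:(lia) ltac:(lia) ltac:(lia) ltac:(lia).
rewrite hM -mulnn; split; lia.
Qed.

Lemma wit7 (R : realType) q : exists s t : nat, [/\ (1 <= s)%N, (s <= t)%N, (t <= 22 * q + 7)%N &
      Mcount (2%:R : R) (22 * q + 7) s t = (((22 * q + 7) ^ 2 + 33 - 10 * (22 * q + 7)) %/ 44)%N].
Proof.
exists (6 * q + 1), (20 * q + 5).
have [A [B [C [hM hA hB hC]]]] := @wit_facts R (22 * q + 7) (6 * q + 1) (20 * q + 5) (2 * q + 2) (2 * q + 2)
  ltac:(lia) ltac:(lia) ltac:(lia) ltac:(lia) ltac:(lia).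
rewrite hM -mulnn; split; lia.
Qed.

Lemma wit8 (R : realType) q : exists s t : nat, [/\ (1 <= s)%N, (s <= t)%N, (t <= 22 * q + 8)%N &
      Mcount (2%:R : R) (22 * q + 8) s t = (((22 * q + 8) ^ 2 + 33 - 10 * (22 * q + 8)) %/ 44)%N].
Proof.
exists (6 * q + 2), (20 * q + 6).
have [A [B [C [hM hA hB hC]]]] := @wit_facts R (22 * q + 8) (6 * q + 2) (20 * q + 6) (2 * q + 2) (2 * q + 0)
  ltac:(lia) ltac:(lia) ltac:(lia) ltac:(lia) ltac:(lia).
rewrite hM -mulnn; split; lia.
Qed.

Lemma wit9 (R : realType) q : exists s t : nat, [/\ (1 <= s)%N, (s <= t)%N, (t <= 22 * q + 9)%N &
      Mcount (2%:R : R) (22 * q + 9) s t = (((22 * q + 9) ^ 2 + 33 - 10 * (22 * q + 9)) %/ 44)%N].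
Proof.
exists (6 * q + 2), (20 * q + 7).
have [A [B [C [hM hA hB hC]]]] := @wit_facts R (22 * q + 9) (6 * q + 2) (20 * q + 7) (2 * q + 2) (2 * q + 1)
  ltac:(lia) ltac:(lia) ltac:(lia) ltac:(lia) ltac:(lia).
rewrite hM -mulnn; split; lia.
Qed.

Lemma wit10 (R : realType) q : exists s t : nat, [/\ (1 <= s)%N, (s <= t)%N, (t <= 22 * q + 10)%N &
      Mcount (2%:R : R) (22 * q + 10) s t = (((22 * q + 10) ^ 2 + 33 - 10 * (22 * q + 10)) %/ 44)%N].
Proof.
exists (6 * q + 2), (20 * q + 8).
have [A [B [C [hM hA hB hC]]]] := @wit_facts R (22 * q + 10) (6 * q + 2) (20 * q + 8) (2 * q + 2) (2 * q + 2)
  ltac:(lia) ltac:(lia) ltac:(lia) ltac:(lia) ltac:(lia).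
rewrite hM -mulnn; split; lia.
Qed.

Lemma wit11 (R : realType) q : exists s t : nat, [/\ (1 <= s)%N, (s <= t)%N, (t <= 22 * q + 11)%N &
      Mcount (2%:R : R) (22 * q + 11) s t = (((22 * q + 11) ^ 2 + 33 - 10 * (22 * q + 11)) %/ 44)%N].
Proof.
exists (6 * q + 2), (20 * q + 8).
have [A [B [C [hM hA hB hC]]]] := @wit_facts R (22 * q + 11) (6 * q + 2) (20 * q + 8) (2 * q + 3) (2 * q + 2)
  ltac:(lia) ltac:(lia) ltac:(lia) ltac:(lia) ltac:(lia).
rewrite hM -mulnn; split; lia.
Qed.

Lemma wit12 (R : realType) q : exists s t : nat, [/\ (1 <= s)%N, (s <= t)%N, (t <= 22 * q + 12)%N &
      Mcount (2%:R : R) (22 * q + 12) s t = (((22 * q + 12) ^ 2 + 33 - 10 * (22 * q + 12)) %/ 44)%N].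
Proof.
exists (6 * q + 3), (20 * q + 10).
have [A [B [C [hM hA hB hC]]]] := @wit_facts R (22 * q + 12) (6 * q + 3) (20 * q + 10) (2 * q + 2) (2 * q + 1)
  ltac:(lia) ltac:(lia) ltac:(lia) ltac:(lia) ltac:(lia).
rewrite hM -mulnn; split; lia.
Qed.

Lemma wit13 (R : realType) q : exists s t : nat, [/\ (1 <= s)%N, (s <= t)%N, (t <= 22 * q + 13)%N &
      Mcount (2%:R : R) (22 * q + 13) s t = (((22 * q + 13) ^ 2 + 33 - 10 * (22 * q + 13)) %/ 44)%N].
Proof.
exists (6 * q + 3), (20 * q + 11).
have [A [B [C [hM hA hB hC]]]] := @wit_facts R (22 * q + 13) (6 * q + 3) (20 * q + 11) (2 * q + 2) (2 * q + 2)
  ltac:(lia) ltac:(lia) ltac:(lia) ltac:(lia) ltac:(lia).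
rewrite hM -mulnn; split; lia.
Qed.

Lemma wit14 (R : realType) q : exists s t : nat, [/\ (1 <= s)%N, (s <= t)%N, (t <= 22 * q + 14)%N &
      Mcount (2%:R : R) (22 * q + 14) s t = (((22 * q + 14) ^ 2 + 33 - 10 * (22 * q + 14)) %/ 44)%N].
Proof.
exists (6 * q + 3), (20 * q + 11).
have [A [B [C [hM hA hB hC]]]] := @wit_facts R (22 * q + 14) (6 * q + 3) (20 * q + 11) (2 * q + 3) (2 * q + 2)
  ltac:(lia) ltac:(lia) ltac:(lia) ltac:(lia) ltac:(lia).
rewrite hM -mulnn; split; lia.
Qed.

Lemma wit15 (R : realType) q : exists s t : nat, [/\ (1 <= s)%N, (s <= t)%N, (t <= 22 * q + 15)%N &
      Mcount (2%:R : R) (22 * q + 15) s t = (((22 * q + 15) ^ 2 + 33 - 10 * (22 * q + 15)) %/ 44)%N].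
Proof.
exists (6 * q + 4), (20 * q + 13).
have [A [B [C [hM hA hB hC]]]] := @wit_facts R (22 * q + 15) (6 * q + 4) (20 * q + 13) (2 * q + 2) (2 * q + 1)
  ltac:(lia) ltac:(lia) ltac:(lia) ltac:(lia) ltac:(lia).
rewrite hM -mulnn; split; lia.
Qed.

Lemma wit16 (R : realType) q : exists s t : nat, [/\ (1 <= s)%N, (s <= t)%N, (t <= 22 * q + 16)%N &
      Mcount (2%:R : R) (22 * q + 16) s t = (((22 * q + 16) ^ 2 + 33 - 10 * (22 * q + 16)) %/ 44)%N].
Proof.
exists (6 * q + 4), (20 * q + 14).
have [A [B [C [hM hA hB hC]]]] := @wit_facts R (22 * q + 16) (6 * q + 4) (20 * q + 14) (2 * q + 2) (2 * q + 2)
  ltac:(lia) ltac:(lia) ltac:(lia) ltac:(lia) ltac:(lia).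
rewrite hM -mulnn; split; lia.
Qed.

Lemma wit17 (R : realType) q : exists s t : nat, [/\ (1 <= s)%N, (s <= t)%N, (t <= 22 * q + 17)%N &
      Mcount (2%:R : R) (22 * q + 17) s t = (((22 * q + 17) ^ 2 + 33 - 10 * (22 * q + 17)) %/ 44)%N].
Proof.
exists (6 * q + 4), (20 * q + 14).
have [A [B [C [hM hA hB hC]]]] := @wit_facts R (22 * q + 17) (6 * q + 4) (20 * q + 14) (2 * q + 3) (2 * q + 2)
  ltac:(lia) ltac:(lia) ltac:(lia) ltac:(lia) ltac:(lia).
rewrite hM -mulnn; split; lia.
Qed.

Lemma wit18 (R : realType) q : exists s t : nat, [/\ (1 <= s)%N, (s <= t)%N, (t <= 22 * q + 18)%N &
      Mcount (2%:R : R) (22 * q + 18) s t = (((22 * q + 18) ^ 2 + 33 - 10 * (22 * q + 18)) %/ 44)%N].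
Proof.
exists (6 * q + 4), (20 * q + 14).
have [A [B [C [hM hA hB hC]]]] := @wit_facts R (22 * q + 18) (6 * q + 4) (20 * q + 14) (2 * q + 4) (2 * q + 2)
  ltac:(lia) ltac:(lia) ltac:(lia) ltac:(lia) ltac:(lia).
rewrite hM -mulnn; split; lia.
Qed.

Lemma wit19 (R : realType) q : exists s t : nat, [/\ (1 <= s)%N, (s <= t)%N, (t <= 22 * q + 19)%N &
      Mcount (2%:R : R) (22 * q + 19) s t = (((22 * q + 19) ^ 2 + 33 - 10 * (22 * q + 19)) %/ 44)%N].
Proof.
exists (6 * q + 5), (20 * q + 17).
have [A [B [C [hM hA hB hC]]]] := @wit_facts R (22 * q + 19) (6 * q + 5) (20 * q + 17) (2 * q + 2) (2 * q + 2)
  ltac:(lia) ltac:(lia) ltac:(lia) ltac:(lia) ltac:(lia).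
rewrite hM -mulnn; split; lia.
Qed.

Lemma wit20 (R : realType) q : exists s t : nat, [/\ (1 <= s)%N, (s <= t)%N, (t <= 22 * q + 20)%N &
      Mcount (2%:R : R) (22 * q + 20) s t = (((22 * q + 20) ^ 2 + 33 - 10 * (22 * q + 20)) %/ 44)%N].
Proof.
exists (6 * q + 5), (20 * q + 17).
have [A [B [C [hM hA hB hC]]]] := @wit_facts R (22 * q + 20) (6 * q + 5) (20 * q + 17) (2 * q + 3) (2 * q + 2)
  ltac:(lia) ltac:(lia) ltac:(lia) ltac:(lia) ltac:(lia).
rewrite hM -mulnn; split; lia.
Qed.

Lemma wit21 (R : realType) q : exists s t : nat, [/\ (1 <= s)%N, (s <= t)%N, (t <= 22 * q + 21)%N &
      Mcount (2%:R : R) (22 * q + 21) s t = (((22 * q + 21) ^ 2 + 33 - 10 * (22 * q + 21)) %/ 44)%N].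
Proof.
exists (6 * q + 5), (20 * q + 17).
have [A [B [C [hM hA hB hC]]]] := @wit_facts R (22 * q + 21) (6 * q + 5) (20 * q + 17) (2 * q + 4) (2 * q + 2)
  ltac:(lia) ltac:(lia) ltac:(lia) ltac:(lia) ltac:(lia).
rewrite hM -mulnn; split; lia.
Qed.

Theorem theorem4p2 (R : realType) (n : nat) : (1 <= n)%N ->
  (exists s t : nat, [/\ (1 <= s)%N, (s <= t)%N, (t <= n)%N &
      Mcount (2%:R : R) n s t = ((n ^ 2 + 33 - 10 * n) %/ 44)%N]) /\
  (forall s t : nat, (1 <= s)%N -> (s <= t)%N -> (t <= n)%N ->
      ((n ^ 2 + 33 - 10 * n) %/ 44 <= Mcount (2%:R : R) n s t)%N).
Proof.
move=> hn; split; last by move=> s t h1 h2 h3; apply: lower.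
case: (leqP n 4) => hn4.
  move: hn hn4; case: n => [|[|[|[|[|n]]]]] // _ _.
  - exists 1, 1; rewrite M_eq //; by rewrite /= ?PS ?P0.
  - exists 1, 1; rewrite M_eq //; by rewrite /= ?PS ?P0.
  - exists 1, 3; rewrite M_eq //; by rewrite /= ?PS ?P0.
  - exists 1, 3; rewrite M_eq //; by rewrite /= ?PS ?P0.
move Hq: (n %/ 22) => q. move Hr: (n %% 22) => r.
have hnq : n = 22 * q + r by lia.
have hr : r < 22 by lia.
clear Hq Hr. subst n. clear hn.
case: r hr hn4 => [|r] hr hn4; first by apply: wit0; lia.
case: r hr hn4 => [|r] hr hn4; first by apply: wit1; lia.
case: r hr hn4 => [|r] hr hn4; first by apply: wit2; lia.
case: r hr hn4 => [|r] hr hn4; first by apply: wit3; lia.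
case: r hr hn4 => [|r] hr hn4; first by apply: wit4; lia.
case: r hr hn4 => [|r] hr hn4; first by exact: wit5.
case: r hr hn4 => [|r] hr hn4; first by exact: wit6.
case: r hr hn4 => [|r] hr hn4; first by exact: wit7.
case: r hr hn4 => [|r] hr hn4; first by exact: wit8.
case: r hr hn4 => [|r] hr hn4; first by exact: wit9.
case: r hr hn4 => [|r] hr hn4; first by exact: wit10.
case: r hr hn4 => [|r] hr hn4; first by exact: wit11.
case: r hr hn4 => [|r] hr hn4; first by exact: wit12.
case: r hr hn4 => [|r] hr hn4; first by exact: wit13.
case: r hr hn4 => [|r] hr hn4; first by exact: wit14.
case: r hr hn4 => [|r] hr hn4; first by exact: wit15.
case: r hr hn4 => [|r] hr hn4; first by exact: wit16.
case: r hr hn4 => [|r] hr hn4; first by exact: wit17.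
case: r hr hn4 => [|r] hr hn4; first by exact: wit18.
case: r hr hn4 => [|r] hr hn4; first by exact: wit19.
case: r hr hn4 => [|r] hr hn4; first by exact: wit20.
case: r hr hn4 => [|r] hr hn4; first by exact: wit21.
lia.
Qed.
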